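(* Assume $p_0\in(0,1)$, $p_j\in(0,1)$ and $\tau_j=\frac{p_0}{p_0+2(1-p_0)p_j}$ for $j=1,\dots,k$. Then for every $\Theta\in\mathbb R^{nd}$, $$\mathbb E_\xi\|G(\Theta)\|^2\le 4\mathcal L\big(F(\Theta)-F(\hat\Theta)\big)+2\sigma^2_{\hat\Theta}.$$
   Context: Clients $1,\dots,n$ are partitioned into nonempty disjoint clusters $\mathcal I_1,\dots,\mathcal I_k$; $d\ge1$. Each $f_i:\mathbb R^d\to\mathbb R$ is differentiable, $\mu$-strongly convex and $L$-smooth ($0<\mu\le L$). Fix $\gamma_i>0$ and $\alpha_j\in[0,1]$, not all $\alpha_j=0$. For $\Theta=(\theta_1,\dots,\theta_n)$ let $\Theta_j$ be the stacked vector of $\theta_i$, $i\in\mathcal I_j$; define $\bar\theta_j=\frac{\sum_{i\in\mathcal I_j}\gamma_i\theta_i}{\sum_{i\in\mathcal I_j}\gamma_i}$, $\bar\theta=\frac{\sum_{j}\sum_{i\in\mathcal I_j}\alpha_j\gamma_i\theta_i}{\sum_{j}\sum_{i\in\mathcal I_j}\alpha_j\gamma_i}$, $\psi_j(\Theta_j)=\frac12\sum_{i\in\mathcal I_j}\gamma_i\|\theta_i-\bar\theta_j\|^2$, $\varphi(\Theta)=\frac12\sum_{j}\alpha_j\sum_{i\in\mathcal I_j}\gamma_i\|\theta_i-\bar\theta\|^2$, $F_j(\Theta_j)=\sum_{i\in\mathcal I_j}f_i(\theta_i)$, and $F(\Theta)=\sum_jF_j(\Theta_j)+\sum_j(1-\alpha_j)\psi_j(\Theta_j)+\varphi(\Theta)$;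 $\hat\Theta$ is its unique minimizer. Gradient oracle: $\xi=(\xi_0,\dots,\xi_k)$ independent Bernoulli with $\mathbb P(\xi_j=1)=p_j$; $G(\Theta)=(G_1,\dots,G_n)$ with, for $i\in\mathcal I_j$: $G_i=\frac{\gamma_i\alpha_j}{p_0}(\theta_i-\bar\theta)+\frac{\gamma_i\tau_j(1-\alpha_j)}{p_0}(\theta_i-\bar\theta_j)$ if $\xi_0=1$; $G_i=\frac{\gamma_i(1-\tau_j)(1-\alpha_j)}{(1-p_0)p_j}(\theta_i-\bar\theta_j)$ if $\xi_0=0,\xi_j=1$; $G_i=\frac{1}{(1-p_0)(1-p_j)}\nabla f_i(\theta_i)$ if $\xi_0=\xi_j=0$. Define $\mathcal L=\max\big\{\frac{2}{p_0}\max_{j}\max_{i\in\mathcal I_j}\alpha_j\gamma_i,\ \max_{j}\frac{2(1-\alpha_j)\max_{i\in\mathcal I_j}\gamma_i}{p_0+2(1-p_0)p_j},\ \frac{L}{1-p_0}\max_{j}\frac{1}{1-p_j}\big\}$ and $\sigma^2_{\hat\Theta}=\frac{2}{p_0}\|\nabla\varphi(\hat\Theta)\|^2+\sum_{j=1}^k\frac{2(1-\alpha_j)^2}{p_0+2(1-p_0)p_j}\|\nabla\psi_j(\hat\Theta_j)\|^2+\frac{1}{1-p_0}\sum_{j=1}^k\frac{1}{1-p_j}\|\nabla F_j(\hat\Theta_j)\|^2$. *)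

(* Defs.v *)
From HB Require Import structures.
From mathcomp Require Import all_boot all_order all_algebra.
From mathcomp Require Import all_classical all_reals all_analysis.
Set Implicit Arguments. Unset Strict Implicit. Unset Printing Implicit Defensive.
Import Order.TTheory GRing.Theory Num.Theory.
Import numFieldNormedType.Exports.
Local Open Scope ring_scope.

(* Clients are 'I_n, clusters are 'I_k; client i belongs to cluster c i.
   Theta in R^{nd} is an n x d matrix whose i-th row is theta_i. *)

Section Defs.
Variable R : realType.

Definition dotv d (u v : 'rV[R]_d) : R := \sum_(l < d) u 0 l * v 0 l.
Definition sqnv d (v : 'rV[R]_d) : R := \sum_(l < d) v 0 l ^+ 2.
Definition enorm d (v : 'rV[R]_d) : R := Num.sqrt (sqnv v).
Definition sqnM n d (A : 'M[R]_(n, d)) : R :=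
  \sum_(i < n) \sum_(l < d) A i l ^+ 2.

Definition gradv d (f : 'rV[R]_d -> R) (x : 'rV[R]_d) : 'rV[R]_d :=
  \row_(l < d) ('D_(delta_mx 0 l) f x : R).
Definition gradM n d (g : 'M[R]_(n, d) -> R) (X : 'M[R]_(n, d)) : 'M[R]_(n, d) :=
  \matrix_(i < n, l < d) ('D_(delta_mx i l) g X : R).

Definition strongly_convex d (mu : R) (f : 'rV[R]_d -> R) : Prop :=
  forall x y : 'rV[R]_d,
    f x + dotv (gradv f x) (y - x) + mu / 2 * sqnv (y - x) <= f y.
Definition smooth d (L : R) (f : 'rV[R]_d -> R) : Prop :=
  forall x y : 'rV[R]_d, enorm (gradv f x - gradv f y) <= L * enorm (x - y).

Variables (n k d : nat) (c : 'I_n -> 'I_k) (gamma : 'I_n -> R) (alpha : 'I_k -> R).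

Definition cmean (Th : 'M[R]_(n, d)) (j : 'I_k) : 'rV[R]_d :=
  (\sum_(i < n | c i == j) gamma i)^-1 *: \sum_(i < n | c i == j) gamma i *: row i Th.
Definition gmean (Th : 'M[R]_(n, d)) : 'rV[R]_d :=
  (\sum_(j < k) \sum_(i < n | c i == j) alpha j * gamma i)^-1 *:
    \sum_(j < k) \sum_(i < n | c i == j) (alpha j * gamma i) *: row i Th.

(* psi_j, phi, F_j, F, as functions of the full Theta
   (psi_j and F_j only depend on the rows of cluster j) *)
Definition psi (j : 'I_k) (Th : 'M[R]_(n, d)) : R :=
  2^-1 * \sum_(i < n | c i == j) gamma i * sqnv (row i Th - cmean Th j).
Definition phi (Th : 'M[R]_(n, d)) : R :=
  2^-1 * \sum_(j < k) alpha j * \sum_(i < n | c i == j) gamma i * sqnv (row i Th - gmean Th).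
Definition Fj (f : 'I_n -> 'rV[R]_d -> R) (j : 'I_k) (Th : 'M[R]_(n, d)) : R :=
  \sum_(i < n | c i == j) f i (row i Th).
Definition Fobj (f : 'I_n -> 'rV[R]_d -> R) (Th : 'M[R]_(n, d)) : R :=
  \sum_(j < k) Fj f j Th + \sum_(j < k) (1 - alpha j) * psi j Th + phi Th.

(* The random gradient oracle.  xi : {ffun 'I_k.+1 -> bool};
   xi ord0 is xi_0 and xi (lift ord0 j) is xi_j for cluster j. *)
Definition Gorac (f : 'I_n -> 'rV[R]_d -> R) (p0 : R) (p tau : 'I_k -> R)
  (xi : {ffun 'I_k.+1 -> bool}) (Th : 'M[R]_(n, d)) : 'M[R]_(n, d) :=
  let Grow (i : 'I_n) : 'rV[R]_d :=
    let j := c i in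
    if xi ord0 then
      (gamma i * alpha j / p0) *: (row i Th - gmean Th)
      + (gamma i * tau j * (1 - alpha j) / p0) *: (row i Th - cmean Th j)
    else if xi (lift ord0 j) then
      (gamma i * (1 - tau j) * (1 - alpha j) / ((1 - p0) * p j)) *: (row i Th - cmean Th j)
    else ((1 - p0) * (1 - p j))^-1 *: gradv (f i) (row i Th) in
  \matrix_(i < n, l < d) Grow i 0 l.

Definition xi_prob (p0 : R) (p : 'I_k -> R) (xi : {ffun 'I_k.+1 -> bool}) : R :=
  (if xi ord0 then p0 else 1 - p0) *
  \prod_(j < k) (if xi (lift ord0 j) then p j else 1 - p j).

Definition EsqG (f : 'I_n -> 'rV[R]_d -> R) (p0 : R) (p tau : 'I_k -> R)
  (Th : 'M[R]_(n, d)) : R :=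
  \sum_(xi : {ffun 'I_k.+1 -> bool}) xi_prob p0 p xi * sqnM (Gorac f p0 p tau xi Th).

(* the constant script-L (maxima of nonnegative quantities; 0 as neutral) *)
Definition scrL (L p0 : R) (p : 'I_k -> R) : R :=
  Num.max (2 / p0 * \big[Num.max/0]_(j < k) \big[Num.max/0]_(i < n | c i == j) (alpha j * gamma i))
  (Num.max (\big[Num.max/0]_(j < k)
              (2 * (1 - alpha j) * \big[Num.max/0]_(i < n | c i == j) gamma i
               / (p0 + 2 * (1 - p0) * p j)))
           (L / (1 - p0) * \big[Num.max/0]_(j < k) (1 - p j)^-1)).

Definition sigma2 (f : 'I_n -> 'rV[R]_d -> R) (p0 : R) (p : 'I_k -> R)
  (Thh : 'M[R]_(n, d)) : R :=
  2 / p0 * sqnM (gradM phi Thh)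
  + \sum_(j < k) (2 * (1 - alpha j) ^+ 2 / (p0 + 2 * (1 - p0) * p j))
                   * sqnM (gradM (psi j) Thh)
  + (1 - p0)^-1 * \sum_(j < k) (1 - p j)^-1 * sqnM (gradM (Fj f j) Thh).

End Defs.

(* Main.v *)
Require Import Defs.
From HB Require Import structures.
From mathcomp Require Import all_boot all_order all_algebra.
From mathcomp Require Import all_classical all_reals all_analysis.
From mathcomp Require Import ring lra.
Import Order.TTheory GRing.Theory Num.Theory.
Import numFieldNormedType.Exports.
Local Open Scope ring_scope.
Set Implicit Arguments. Unset Strict Implicit. Unset Printing Implicit Defensive.
Lemma derive_quad (R : realType) (V : normedModType R) (g : V -> R) (v x : V) (a b : R) :
  (forall h : R, g (h *: v + x) = g x + h * a + h ^+ 2 * b) -> 'D_v g x = a.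
Proof.
move=> H; rewrite /derive; apply: cvg_lim => //.
have E : {near dnbhs (0:R), (fun h : R => a + h * b) =1 (fun h => h^-1 *: ((g \o shift x) (h *: v) - g x))}.
  near=> h; rewrite /= H.
  have hN0 : h != 0 by near: h; exact: nbhs_dnbhs_neq.
  rewrite /GRing.scale /=. field. done.
apply: cvg_trans (near_eq_cvg E) _.
apply: cvg_within_filter.
have H0 : ((fun h : R => a + h * b) @ nbhs (0:R) --> a + 0 * b)%classic.
  apply: cvgD; first exact: cvg_cst.
  apply: cvgM; [exact: cvg_id | exact: cvg_cst].
by rewrite mul0r addr0 in H0.
Unshelve. all: by end_near.
Qed.
Lemma sqnv_ge0 (R : realType) d (v : 'rV[R]_d) : 0 <= sqnv v.
Proof. by rewrite /sqnv; apply: sumr_ge0 => l _; rewrite sqr_ge0. Qed.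

Lemma sqnvD (R : realType) d (u v : 'rV[R]_d) :
  sqnv (u + v) = sqnv u + 2 * dotv u v + sqnv v.
Proof.
rewrite /sqnv /dotv mulr_sumr -!big_split; apply: eq_bigr => l _ /=.
by rewrite !mxE; ring.
Qed.

Lemma sqnvB (R : realType) d (u v : 'rV[R]_d) :
  sqnv (u - v) = sqnv u - 2 * dotv u v + sqnv v.
Proof.
rewrite /sqnv /dotv mulr_sumr -sumrB -big_split; apply: eq_bigr => l _ /=.
by rewrite !mxE; ring.
Qed.

Lemma sqnvZ (R : realType) d (a : R) (v : 'rV[R]_d) : sqnv (a *: v) = a ^+ 2 * sqnv v.
Proof.
rewrite /sqnv mulr_sumr; apply: eq_bigr => l _ /=.
by rewrite !mxE; ring.
Qed.

Lemma dotvDr (R : realType) d (u v w : 'rV[R]_d) : dotv u (v + w) = dotv u v + dotv u w.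
Proof. rewrite /dotv -big_split; apply: eq_bigr => l _ /=; rewrite !mxE; ring. Qed.
Lemma dotvDl (R : realType) d (u v w : 'rV[R]_d) : dotv (v + w) u = dotv v u + dotv w u.
Proof. rewrite /dotv -big_split; apply: eq_bigr => l _ /=; rewrite !mxE; ring. Qed.
Lemma dotvBr (R : realType) d (u v w : 'rV[R]_d) : dotv u (v - w) = dotv u v - dotv u w.
Proof. rewrite /dotv -sumrB; apply: eq_bigr => l _ /=; rewrite !mxE; ring. Qed.
Lemma dotvBl (R : realType) d (u v w : 'rV[R]_d) : dotv (v - w) u = dotv v u - dotv w u.
Proof. rewrite /dotv -sumrB; apply: eq_bigr => l _ /=; rewrite !mxE; ring. Qed.
Lemma dotvZr (R : realType) d (a : R) (u v : 'rV[R]_d) : dotv u (a *: v) = a * dotv u v.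
Proof. rewrite /dotv mulr_sumr; apply: eq_bigr => l _ /=; rewrite !mxE; ring. Qed.
Lemma dotvZl (R : realType) d (a : R) (u v : 'rV[R]_d) : dotv (a *: u) v = a * dotv u v.
Proof. rewrite /dotv mulr_sumr; apply: eq_bigr => l _ /=; rewrite !mxE; ring. Qed.
Lemma dotvC (R : realType) d (u v : 'rV[R]_d) : dotv u v = dotv v u.
Proof. rewrite /dotv; apply: eq_bigr => l _ /=; ring. Qed.
Lemma dotvNr (R : realType) d (u v : 'rV[R]_d) : dotv u (- v) = - dotv u v.
Proof. rewrite /dotv -sumrN; apply: eq_bigr => l _ /=; rewrite !mxE; ring. Qed.
Lemma sqnvN (R : realType) d (v : 'rV[R]_d) : sqnv (- v) = sqnv v.
Proof. rewrite /sqnv; apply: eq_bigr => l _ /=; rewrite !mxE; ring. Qed.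
Lemma dotv0r (R : realType) d (u : 'rV[R]_d) : dotv u 0 = 0.
Proof. rewrite /dotv big1 // => l _; by rewrite mxE mulr0. Qed.

Lemma sqnvD_le (R : realType) d (u v : 'rV[R]_d) :
  sqnv (u + v) <= 2 * sqnv u + 2 * sqnv v.
Proof.
have := sqnv_ge0 (u - v); rewrite sqnvB sqnvD; lra.
Qed.

Lemma dotv_le (R : realType) d (t : R) (u v : 'rV[R]_d) : 0 < t ->
  2 * dotv u v <= t * sqnv u + t^-1 * sqnv v.
Proof.
move=> t0.
have := sqnv_ge0 (Num.sqrt t *: u - (Num.sqrt t)^-1 *: v).
rewrite sqnvB !sqnvZ dotvZl dotvZr exprVn sqr_sqrtr; last exact: ltW.
have st : Num.sqrt t != 0 by rewrite sqrtr_eq0 -ltNge.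
rewrite [X in 2 * X]mulrA mulfV // mul1r; lra.
Qed.

Lemma enorm_sq (R : realType) d (v : 'rV[R]_d) : enorm v ^+ 2 = sqnv v.
Proof. by rewrite /enorm sqr_sqrtr // sqnv_ge0. Qed.

Lemma smooth_sq (R : realType) d (L : R) (f : 'rV[R]_d -> R) x y :
  smooth L f -> sqnv (gradv f x - gradv f y) <= L ^+ 2 * sqnv (x - y).
Proof.
move=> /(_ x y) H.
rewrite -!enorm_sq -exprMn; apply: lerXn2r => //; rewrite ?nnegrE //.
  by rewrite /enorm sqrtr_ge0.
by apply: le_trans H; rewrite /enorm sqrtr_ge0.
Qed.
Lemma lim_le (R : realType) (a b C : R) : 0 <= C ->
  (forall m : nat, (0 < m)%N -> a <= b + C / m%:R) -> a <= b.
Proof.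
move=> C0 H; apply/ler_addgt0Pr => e e0.
have hb := archi_boundP (divr_ge0 C0 (ltW e0)).
set N := Num.bound (C / e) in hb.
apply: (le_trans (H N.+1 isT)); rewrite lerD2l.
have m0 : (0 : R) < N.+1%:R by rewrite ltr0n.
rewrite ler_pdivrMr // -ler_pdivrMl //.
rewrite mulrC; apply: (le_trans (ltW hb)); rewrite ler_nat; exact: leqnSn.
Qed.

Lemma grad_inc_bound (R : realType) d (L r : R) (f : 'rV[R]_d -> R) x D :
  0 < L -> 0 < r -> smooth L f ->
  dotv (gradv f (x + r *: D) - gradv f x) D <= L * r * sqnv D.
Proof.
move=> L0 r0 sm.
have Lr : 0 < L * r by rewrite mulr_gt0.
have Lr' : 0 < (L * r)^-1 by rewrite invr_gt0.
have H1 := dotv_le (gradv f (x + r *: D) - gradv f x) D Lr'.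
have H2 := smooth_sq (x + r *: D) x sm.
rewrite addrAC subrr add0r sqnvZ in H2.
have H3 : (L * r)^-1 * sqnv (gradv f (x + r *: D) - gradv f x) <= (L * r)^-1 * (L ^+ 2 * (r ^+ 2 * sqnv D)).
  by apply: ler_wpM2l => //; rewrite invr_ge0 ltW.
have E : (L * r)^-1 * (L ^+ 2 * (r ^+ 2 * sqnv D)) = L * r * sqnv D.
  by field; rewrite ?gt_eqF.
rewrite invrK E in H1 H3; lra.
Qed.

Lemma descent (R : realType) d (mu L : R) (f : 'rV[R]_d -> R) x y :
  0 <= mu -> 0 < L -> strongly_convex mu f -> smooth L f ->
  f y <= f x + dotv (gradv f x) (y - x) + L / 2 * sqnv (y - x).
Proof.
move=> mu0 L0 sc sm.
set D := y - x.
have sD := sqnv_ge0 D.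
apply: (@lim_le _ _ _ (L / 2 * sqnv D)); first by apply: mulr_ge0 => //; apply: divr_ge0 => //; exact: ltW.
move=> m m0.
set s : R := m%:R^-1.
have s0 : 0 < s by rewrite invr_gt0 ltr0n.
have key : forall kk : nat, f (x + (kk%:R * s) *: D) <=
   f x + (kk%:R * s) * dotv (gradv f x) D + L * s ^+ 2 * (kk%:R * (kk%:R + 1) / 2) * sqnv D.
  elim=> [|kk IH].
    by rewrite !mul0r scale0r addr0 mulr0 mul0r !addr0.
  set a := x + (kk%:R * s) *: D.
  set b := x + (kk.+1%:R * s) *: D.
  have Hc := sc b a.
  have ab : a - b = - (s *: D).
    rewrite /a /b opprD addrACA subrr add0r -scalerBl -opprB -mulrBl.
    by rewrite -natrB // subSnn mul1r scaleNr.
  rewrite ab dotvNr dotvZr sqnvN in Hc.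
  have r0 : 0 < kk.+1%:R * s by rewrite mulr_gt0 // ltr0n.
  have Hg := grad_inc_bound x D L0 r0 sm.
  rewrite dotvBl in Hg.
  have Hm : 0 <= mu / 2 * sqnv (s *: D) by rewrite mulr_ge0 ?sqnv_ge0 // divr_ge0.
  have Hs : s * dotv (gradv f b) D <= s * (dotv (gradv f x) D + L * (kk.+1%:R * s) * sqnv D).
    by apply: ler_wpM2l; [exact: ltW | rewrite /b; lra].
  have E1 : s * (dotv (gradv f x) D + L * (kk.+1%:R * s) * sqnv D) =
            s * dotv (gradv f x) D + L * s ^+ 2 * kk.+1%:R * sqnv D by ring.
  have E2 : kk.+1%:R * s * dotv (gradv f x) D = kk%:R * s * dotv (gradv f x) D + s * dotv (gradv f x) D.
    by rewrite -addn1 natrD; ring.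
  have E3 : L * s ^+ 2 * (kk.+1%:R * (kk.+1%:R + 1) / 2) * sqnv D =
            L * s ^+ 2 * (kk%:R * (kk%:R + 1) / 2) * sqnv D + L * s ^+ 2 * kk.+1%:R * sqnv D.
    by rewrite -addn1 natrD; field.
  rewrite E2 E3; rewrite E1 in Hs; rewrite -/a; lra.
have := key m.
rewrite /s mulfV ?pnatr_eq0 -?lt0n // scale1r addrC subrK.
have E : L * m%:R^-1 ^+ 2 * (m%:R * (m%:R + 1) / 2) * sqnv D = L / 2 * sqnv D + L / 2 * sqnv D / m%:R.
  by field; rewrite pnatr_eq0 -lt0n.
rewrite E mul1r -/D; lra.
Qed.
Lemma dotvv (R : realType) d (u : 'rV[R]_d) : dotv u u = sqnv u.
Proof. rewrite /dotv /sqnv; apply: eq_bigr => l _; ring. Qed.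

Lemma cocoercive (R : realType) d (mu L : R) (f : 'rV[R]_d -> R) x y :
  0 <= mu -> 0 < L -> strongly_convex mu f -> smooth L f ->
  sqnv (gradv f y - gradv f x) / (2 * L) <= f y - f x - dotv (gradv f x) (y - x).
Proof.
move=> mu0 L0 sc sm.
set u := gradv f y - gradv f x.
set w := y - L^-1 *: u.
have H1 := sc x w.
have H2 := descent y w mu0 L0 sc sm.
have e1 : w - x = (y - x) - L^-1 *: u by rewrite /w addrAC.
have e2 : w - y = - (L^-1 *: u) by rewrite /w addrAC subrr add0r.
rewrite e1 dotvBr dotvZr in H1.
rewrite e2 dotvNr dotvZr sqnvN sqnvZ in H2.
have Hm : 0 <= mu / 2 * sqnv (y - x - L^-1 *: u) by rewrite mulr_ge0 ?sqnv_ge0 // divr_ge0.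
have E : L^-1 * dotv (gradv f y) u - L^-1 * dotv (gradv f x) u = L^-1 * sqnv u.
  by rewrite -mulrBr -dotvBl dotvv.
have E2 : L / 2 * (L^-1 ^+ 2 * sqnv u) = sqnv u / (2 * L).
  by field; rewrite gt_eqF.
have E3 : sqnv u / (2 * L) = L^-1 * sqnv u / 2 by field; rewrite gt_eqF.
rewrite E2 in H2; rewrite E3 in E2 *; lra.
Qed.
Lemma rowD' (R : realType) n d (i : 'I_n) (X Y : 'M[R]_(n, d)) : row i (X + Y) = row i X + row i Y.
Proof. by apply/rowP => l; rewrite !mxE. Qed.
Lemma rowB' (R : realType) n d (i : 'I_n) (X Y : 'M[R]_(n, d)) : row i (X - Y) = row i X - row i Y.
Proof. by apply/rowP => l; rewrite !mxE. Qed.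
Lemma rowZ' (R : realType) n d (i : 'I_n) (a : R) (X : 'M[R]_(n, d)) : row i (a *: X) = a *: row i X.
Proof. by apply/rowP => l; rewrite !mxE. Qed.

Definition Vr (R : realType) n d (w : 'I_n -> R) (M : 'I_n -> 'M[R]_(n, d) -> 'rV[R]_d)
  (X : 'M[R]_(n, d)) : R := \sum_i w i * sqnv (row i X - M i X).

Lemma Vr_split (R : realType) n d (w : 'I_n -> R) (M : 'I_n -> 'M[R]_(n, d) -> 'rV[R]_d) X Y :
  (forall i X Y, M i X - M i Y = M i (X - Y)) ->
  (forall Z, \sum_i w i * dotv (row i Y - M i Y) (M i Z) = 0) ->
  Vr w M X = Vr w M Y + 2 * \sum_i w i * dotv (row i Y - M i Y) (row i X - row i Y)
             + Vr w M (X - Y).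
Proof.
move=> Mlin Mort.
have E : forall i, row i X - M i X = (row i Y - M i Y) + (row i (X - Y) - M i (X - Y)).
  by move=> i; rewrite -Mlin; apply/rowP => l; rewrite !mxE; ring.
have O := Mort (X - Y).
rewrite /Vr mulr_sumr -!big_split /=.
transitivity (\sum_i (w i * sqnv (row i Y - M i Y) + 2 * (w i * dotv (row i Y - M i Y) (row i X - row i Y)) +
   w i * sqnv (row i (X - Y) - M i (X - Y))) - 2 * \sum_i w i * dotv (row i Y - M i Y) (M i (X - Y))).
  rewrite mulr_sumr -sumrB; apply: eq_bigr => i _.
  rewrite E sqnvD dotvBr rowB'; ring.
by rewrite O mulr0 subr0.
Qed.

Lemma Vr_scale (R : realType) n d (w : 'I_n -> R) (M : 'I_n -> 'M[R]_(n, d) -> 'rV[R]_d) (a : R) Z :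
  (forall i Z, M i (a *: Z) = a *: M i Z) ->
  Vr w M (a *: Z) = a ^+ 2 * Vr w M Z.
Proof.
move=> Mh; rewrite /Vr mulr_sumr; apply: eq_bigr => i _.
by rewrite Mh rowZ' -scalerBr sqnvZ; ring.
Qed.
Lemma sum_part (R : realType) n k (c : 'I_n -> 'I_k) (F : 'I_n -> 'I_k -> R) :
  \sum_(j < k) \sum_(i < n | c i == j) F i j = \sum_(i < n) F i (c i).
Proof.
rewrite (partition_big c (fun _ => true)) //=; apply: eq_bigr => j _.
by apply: eq_big => // i /eqP ->.
Qed.

Lemma wsum_zero (R : realType) n (w x : 'I_n -> R) : \sum_i w i != 0 ->
  \sum_i w i * (x i - (\sum_i w i)^-1 * \sum_i w i * x i) = 0.
Proof.
move=> W0.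
rewrite (eq_bigr (fun i => w i * x i - w i * ((\sum_i w i)^-1 * \sum_i w i * x i))); last by move=> i _; ring.
by rewrite sumrB -mulr_suml mulrA mulfV // mul1r subrr.
Qed.

Definition wg (R : realType) n k (c : 'I_n -> 'I_k) (gamma : 'I_n -> R) (alpha : 'I_k -> R) (i : 'I_n) : R :=
  alpha (c i) * gamma i.
Definition wcl (R : realType) n k (c : 'I_n -> 'I_k) (gamma : 'I_n -> R) (alpha : 'I_k -> R) (i : 'I_n) : R :=
  (1 - alpha (c i)) * gamma i.
Definition wc (R : realType) n k (c : 'I_n -> 'I_k) (gamma : 'I_n -> R) (j : 'I_k) (i : 'I_n) : R :=
  if c i == j then gamma i else 0.

Lemma gmean_coord (R : realType) n k d (c : 'I_n -> 'I_k) (gamma : 'I_n -> R) (alpha : 'I_k -> R)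
  (X : 'M[R]_(n, d)) l :
  gmean c gamma alpha X 0 l = (\sum_i wg c gamma alpha i)^-1 * \sum_i wg c gamma alpha i * X i l.
Proof.
rewrite /gmean mxE summxE.
rewrite (sum_part c (fun i j => alpha j * gamma i)).
congr (_ * _).
rewrite (eq_bigr (fun j => \sum_(i < n | c i == j) alpha j * gamma i * X i l)); last first.
  by move=> j _; rewrite summxE; apply: eq_bigr => i _; rewrite !mxE.
by rewrite (sum_part c (fun i j => alpha j * gamma i * X i l)).
Qed.

Lemma cmean_coord (R : realType) n k d (c : 'I_n -> 'I_k) (gamma : 'I_n -> R)
  (X : 'M[R]_(n, d)) j l :
  cmean c gamma X j 0 l = (\sum_i wc c gamma j i)^-1 * \sum_i wc c gamma j i * X i l.
Proof.
rewrite /cmean mxE summxE /wc -big_mkcond /=; congr (_ * _).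
rewrite big_mkcond /=; apply: eq_bigr => i _; case: ifP => _; last by rewrite mul0r.
by rewrite !mxE.
Qed.
Lemma orth_const (R : realType) n d (w : 'I_n -> R) (m : 'rV[R]_d) (Y : 'M[R]_(n, d)) (v : 'rV[R]_d) :
  (forall l, \sum_i w i * (Y i l - m 0 l) = 0) ->
  \sum_i w i * dotv (row i Y - m) v = 0.
Proof.
move=> H.
transitivity (\sum_l v 0 l * \sum_i w i * (Y i l - m 0 l)).
  rewrite /dotv; under eq_bigr do rewrite mulr_sumr.
  rewrite exchange_big /=; apply: eq_bigr => l _; rewrite mulr_sumr; apply: eq_bigr => i _.
  by rewrite !mxE; ring.
by rewrite big1 // => l _; rewrite H mulr0.
Qed.


Lemma matB (R : realType) m d (A B : 'M[R]_(m, d)) i l : (A - B) i l = A i l - B i l.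
Proof. by rewrite !mxE. Qed.
Lemma matZ (R : realType) m d (a : R) (A : 'M[R]_(m, d)) i l : (a *: A) i l = a * A i l.
Proof. by rewrite !mxE. Qed.

Lemma gmean_lin (R : realType) n k d (c : 'I_n -> 'I_k) (gamma : 'I_n -> R) (alpha : 'I_k -> R)
  (X Y : 'M[R]_(n, d)) : gmean c gamma alpha X - gmean c gamma alpha Y = gmean c gamma alpha (X - Y).
Proof.
apply/rowP => l; rewrite matB !gmean_coord -mulrBr -sumrB; congr (_ * _).
by apply: eq_bigr => i _; rewrite !mxE; ring.
Qed.

Lemma gmean_hom (R : realType) n k d (c : 'I_n -> 'I_k) (gamma : 'I_n -> R) (alpha : 'I_k -> R)
  (a : R) (X : 'M[R]_(n, d)) : gmean c gamma alpha (a *: X) = a *: gmean c gamma alpha X.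
Proof.
apply/rowP => l; rewrite [RHS]matZ !gmean_coord [RHS]mulrCA [in RHS]mulr_sumr; congr (_ * _).
by apply: eq_bigr => i _; rewrite !mxE; ring.
Qed.

Lemma cmean_lin (R : realType) n k d (c : 'I_n -> 'I_k) (gamma : 'I_n -> R) j
  (X Y : 'M[R]_(n, d)) : cmean c gamma X j - cmean c gamma Y j = cmean c gamma (X - Y) j.
Proof.
apply/rowP => l; rewrite matB !cmean_coord -mulrBr -sumrB; congr (_ * _).
by apply: eq_bigr => i _; rewrite !mxE; ring.
Qed.

Lemma cmean_hom (R : realType) n k d (c : 'I_n -> 'I_k) (gamma : 'I_n -> R) j
  (a : R) (X : 'M[R]_(n, d)) : cmean c gamma (a *: X) j = a *: cmean c gamma X j.
Proof.
apply/rowP => l; rewrite [RHS]matZ !cmean_coord [RHS]mulrCA [in RHS]mulr_sumr; congr (_ * _).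
by apply: eq_bigr => i _; rewrite !mxE; ring.
Qed.

Lemma gmean_orth (R : realType) n k d (c : 'I_n -> 'I_k) (gamma : 'I_n -> R) (alpha : 'I_k -> R)
  (Y Z : 'M[R]_(n, d)) : \sum_i wg c gamma alpha i != 0 ->
  \sum_i wg c gamma alpha i * dotv (row i Y - gmean c gamma alpha Y) (gmean c gamma alpha Z) = 0.
Proof.
move=> W0; apply: orth_const => l.
by rewrite gmean_coord wsum_zero.
Qed.

Lemma cmean_orth (R : realType) n k d (c : 'I_n -> 'I_k) (gamma : 'I_n -> R) j
  (Y : 'M[R]_(n, d)) v : \sum_i wc c gamma j i != 0 ->
  \sum_i wc c gamma j i * dotv (row i Y - cmean c gamma Y j) v = 0.
Proof.
move=> W0; apply: orth_const => l.
by rewrite cmean_coord wsum_zero.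
Qed.

Lemma cl_orth (R : realType) n k d (c : 'I_n -> 'I_k) (gamma : 'I_n -> R) (alpha : 'I_k -> R)
  (Y Z : 'M[R]_(n, d)) : (forall j, \sum_i wc c gamma j i != 0) ->
  \sum_i wcl c gamma alpha i * dotv (row i Y - cmean c gamma Y (c i)) (cmean c gamma Z (c i)) = 0.
Proof.
move=> W0.
rewrite -(sum_part c (fun i j => (1 - alpha j) * gamma i * dotv (row i Y - cmean c gamma Y j) (cmean c gamma Z j))).
rewrite big1 // => j _.
transitivity ((1 - alpha j) * \sum_i wc c gamma j i * dotv (row i Y - cmean c gamma Y j) (cmean c gamma Z j)).
  rewrite mulr_sumr big_mkcond /=; apply: eq_bigr => i _; rewrite /wc.
  by case: ifP => _; [ring | rewrite !mul0r mulr0].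
by rewrite cmean_orth // mulr0.
Qed.
Lemma Fj_sum (R : realType) n k d (c : 'I_n -> 'I_k) (f : 'I_n -> 'rV[R]_d -> R) (X : 'M[R]_(n, d)) :
  \sum_(j < k) Fj c f j X = \sum_i f i (row i X).
Proof. by rewrite /Fj (sum_part c (fun i j => f i (row i X))). Qed.

Lemma psi_eq (R : realType) n k d (c : 'I_n -> 'I_k) (gamma : 'I_n -> R) j (X : 'M[R]_(n, d)) :
  psi c gamma j X = 2^-1 * Vr (wc c gamma j) (fun _ Y => cmean c gamma Y j) X.
Proof.
rewrite /psi /Vr big_mkcond /=; congr (_ * _); apply: eq_bigr => i _; rewrite /wc.
by case: ifP => _ //; rewrite mul0r.
Qed.

Lemma phi_eq (R : realType) n k d (c : 'I_n -> 'I_k) (gamma : 'I_n -> R) (alpha : 'I_k -> R) (X : 'M[R]_(n, d)) :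
  phi c gamma alpha X = 2^-1 * Vr (wg c gamma alpha) (fun _ Y => gmean c gamma alpha Y) X.
Proof.
rewrite /phi /Vr; congr (_ * _).
under eq_bigr do rewrite mulr_sumr.
rewrite (sum_part c (fun i j => alpha j * (gamma i * sqnv (row i X - gmean c gamma alpha X)))).
by apply: eq_bigr => i _; rewrite /wg mulrA.
Qed.

Lemma Fobj_sum (R : realType) n k d (c : 'I_n -> 'I_k) (gamma : 'I_n -> R) (alpha : 'I_k -> R)
  (f : 'I_n -> 'rV[R]_d -> R) (X : 'M[R]_(n, d)) :
  Fobj c gamma alpha f X = \sum_i f i (row i X)
    + 2^-1 * Vr (wcl c gamma alpha) (fun i Y => cmean c gamma Y (c i)) X
    + 2^-1 * Vr (wg c gamma alpha) (fun _ Y => gmean c gamma alpha Y) X.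
Proof.
rewrite /Fobj Fj_sum phi_eq; congr (_ + _ + _).
rewrite /psi /Vr mulr_sumr.
rewrite -(sum_part c (fun i j => 2^-1 * ((1 - alpha j) * gamma i * sqnv (row i X - cmean c gamma X j)))).
apply: eq_bigr => j _; rewrite !mulr_sumr; apply: eq_bigr => i _; ring.
Qed.
Lemma row_hdelta (R : realType) n d (i i0 : 'I_n) l (h : R) (Y : 'M[R]_(n, d)) :
  row i (h *: delta_mx i0 l + Y) = if i == i0 then h *: delta_mx 0 l + row i0 Y else row i Y.
Proof.
apply/rowP => l'; have [-> | H] := eqVneq i i0.
  by rewrite !mxE !eqxx.
by rewrite !mxE (negbTE H) /= mulr0 add0r.
Qed.

Lemma dotv_rowdelta (R : realType) n d (a : 'rV[R]_d) (i i0 : 'I_n) l :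
  dotv a (row i (delta_mx i0 l)) = if i == i0 then a 0 l else 0.
Proof.
rewrite /dotv; have [-> | H] := eqVneq i i0.
  rewrite (bigD1 l) //= big1 => [|l' /negbTE Hl].
    by rewrite !mxE !eqxx mulr1 addr0.
  by rewrite !mxE Hl eqxx /= mulr0.
by rewrite big1 // => l' _; rewrite !mxE (negbTE H) mulr0.
Qed.

Lemma cross_delta (R : realType) n d (w : 'I_n -> R) (A : 'I_n -> 'rV[R]_d) i0 l :
  \sum_i w i * dotv (A i) (row i (delta_mx i0 l)) = w i0 * A i0 0 l.
Proof.
rewrite (bigD1 i0) //= big1 => [|i /negbTE H]; rewrite dotv_rowdelta ?eqxx ?H.
  by rewrite addr0.
by rewrite mulr0.
Qed.

Lemma derive_Vr (R : realType) n d (g : 'M[R]_(n, d) -> R) (w : 'I_n -> R)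
  (M : 'I_n -> 'M[R]_(n, d) -> 'rV[R]_d) Y i0 l :
  (forall X, g X = 2^-1 * Vr w M X) ->
  (forall i X Y, M i X - M i Y = M i (X - Y)) ->
  (forall i (a : R) Z, M i (a *: Z) = a *: M i Z) ->
  (forall Z, \sum_i w i * dotv (row i Y - M i Y) (M i Z) = 0) ->
  'D_(delta_mx i0 l) g Y = w i0 * (row i0 Y - M i0 Y) 0 l.
Proof.
move=> Hg Ml Mh Mo.
apply: (@derive_quad _ _ _ _ _ _ (2^-1 * Vr w M (delta_mx i0 l))) => h.
rewrite !Hg (Vr_split (h *: delta_mx i0 l + Y) Ml Mo) addrK Vr_scale //.
under eq_bigr do rewrite rowD' addrK rowZ' dotvZr mulrCA.
by rewrite -mulr_sumr cross_delta; field.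
Qed.

Lemma derive_Fj (R : realType) n k d (c : 'I_n -> 'I_k) (f : 'I_n -> 'rV[R]_d -> R) j
  (Y : 'M[R]_(n, d)) i0 l :
  'D_(delta_mx i0 l) (Fj c f j) Y = if c i0 == j then 'D_(delta_mx 0 l) (f i0) (row i0 Y) else 0.
Proof.
have E : forall h : R, Fj c f j (h *: delta_mx i0 l + Y) - Fj c f j Y =
   if c i0 == j then f i0 (h *: delta_mx 0 l + row i0 Y) - f i0 (row i0 Y) else 0.
  move=> h; rewrite /Fj -sumrB big_mkcond /=.
  rewrite (bigD1 i0) //= big1 => [|i /negbTE H]; last by rewrite row_hdelta H; case: ifP => _; rewrite ?subrr.
  by rewrite row_hdelta eqxx addr0.
case: ifP => Hc; last first.
  apply: (@derive_quad _ _ _ _ _ _ 0) => h.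
  by have := E h; rewrite Hc => /eqP; rewrite subr_eq0 => /eqP ->; rewrite !mulr0 !addr0.
rewrite /derive.
have -> : (fun h : R => h^-1 *: ((Fj c f j \o shift Y) (h *: delta_mx i0 l) - Fj c f j Y)) =
  (fun h : R => h^-1 *: ((f i0 \o shift (row i0 Y)) (h *: delta_mx 0 l) - f i0 (row i0 Y))).
  by apply: funext => h /=; rewrite E Hc.
by [].
Qed.
Lemma prod_two (R : realType) (I : finType) (a b : I) (G : I -> R) : a != b ->
  (forall t, t != a -> t != b -> G t = 1) -> \prod_t G t = G a * G b.
Proof.
move=> ab H; rewrite (bigD1 a) //= (bigD1 b) /=; last by rewrite eq_sym ab.
rewrite big1 ?mulr1 // => t /andP [ta tb]; exact: H.
Qed.

Definition qb (R : realType) k (p0 : R) (p : 'I_k -> R) (t : 'I_k.+1) (b : bool) : R :=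
  match unlift ord0 t with
  | None => if b then p0 else 1 - p0
  | Some j => if b then p j else 1 - p j
  end.

Lemma xi_prodE (R : realType) k (p0 : R) (p : 'I_k -> R) (xi : {ffun 'I_k.+1 -> bool}) :
  xi_prob p0 p xi = \prod_t qb p0 p t (xi t).
Proof.
rewrite /xi_prob big_ord_recl /qb unlift_none; congr (_ * _).
by apply: eq_bigr => j _; rewrite liftK.
Qed.

Lemma marg_ind (R : realType) k (p0 : R) (p : 'I_k -> R) (j : 'I_k) (b0 b1 : bool) :
  \sum_(xi : {ffun 'I_k.+1 -> bool}) xi_prob p0 p xi * ((xi ord0 == b0) && (xi (lift ord0 j) == b1))%:R =
  qb p0 p ord0 b0 * qb p0 p (lift ord0 j) b1.
Proof.
set J := lift ord0 j.
have J0 : ord0 != J by exact: neq_lift.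
pose F (t : 'I_k.+1) (b : bool) := qb p0 p t b *
   (if t == ord0 then (b == b0)%:R else if t == J then (b == b1)%:R else 1).
transitivity (\sum_(xi : {ffun 'I_k.+1 -> bool}) \prod_t F t (xi t)).
  apply: eq_bigr => xi _; rewrite xi_prodE /F big_split /=; congr (_ * _).
  rewrite (prod_two J0); last by move=> t /negbTE -> /negbTE ->.
  by rewrite eqxx [J == ord0]eq_sym (negbTE J0) eqxx -natrM mulnb.
rewrite -(bigA_distr_bigA (fun t b => F t b)) (prod_two J0); last first.
  move=> t ta tb; rewrite big_bool /F (negbTE ta) (negbTE tb) !mulr1 /qb.
  case: (unliftP ord0 t) => [j' _|]; first by rewrite /= addrC subrK.
  by move=> E; rewrite E eqxx in ta.
rewrite !big_bool /F eqxx [J == ord0]eq_sym (negbTE J0) eqxx.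
rewrite /=; clear F; by case: b0; case: b1; rewrite /= ?mulr1 ?mulr0 ?addr0 ?add0r.
Qed.

Lemma marg (R : realType) k (p0 : R) (p : 'I_k -> R) (j : 'I_k) (h : bool -> bool -> R) :
  \sum_(xi : {ffun 'I_k.+1 -> bool}) xi_prob p0 p xi * h (xi ord0) (xi (lift ord0 j)) =
  p0 * (p j * h true true + (1 - p j) * h true false) +
  (1 - p0) * (p j * h false true + (1 - p j) * h false false).
Proof.
have E : forall xi : {ffun 'I_k.+1 -> bool}, h (xi ord0) (xi (lift ord0 j)) =
   \sum_(b0 : bool) \sum_(b1 : bool) h b0 b1 * ((xi ord0 == b0) && (xi (lift ord0 j) == b1))%:R.
  move=> xi; rewrite !big_bool.
  by case: (xi ord0); case: (xi (lift ord0 j)); rewrite /= ?mulr1 ?mulr0 ?addr0 ?add0r.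
transitivity (\sum_(xi : {ffun 'I_k.+1 -> bool}) \sum_(b0 : bool) \sum_(b1 : bool)
   h b0 b1 * (xi_prob p0 p xi * ((xi ord0 == b0) && (xi (lift ord0 j) == b1))%:R)).
  apply: eq_bigr => xi _; rewrite E mulr_sumr; apply: eq_bigr => b0 _.
  rewrite mulr_sumr; apply: eq_bigr => b1 _; ring.
rewrite exchange_big /=.
transitivity (\sum_(b0 : bool) \sum_(b1 : bool) h b0 b1 * (qb p0 p ord0 b0 * qb p0 p (lift ord0 j) b1)).
  apply: eq_bigr => b0 _; rewrite exchange_big /=; apply: eq_bigr => b1 _.
  by rewrite -mulr_sumr marg_ind.
rewrite !big_bool /qb unlift_none liftK /=; ring.
Qed.
Definition Ar (R : realType) n k d (c : 'I_n -> 'I_k) (gamma : 'I_n -> R) (alpha : 'I_k -> R)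
  (i : 'I_n) (X : 'M[R]_(n, d)) : 'rV[R]_d :=
  wg c gamma alpha i *: (row i X - gmean c gamma alpha X).
Definition Br (R : realType) n k d (c : 'I_n -> 'I_k) (gamma : 'I_n -> R) (alpha : 'I_k -> R)
  (i : 'I_n) (X : 'M[R]_(n, d)) : 'rV[R]_d :=
  wcl c gamma alpha i *: (row i X - cmean c gamma X (c i)).
Definition Sfun (R : realType) n k d (c : 'I_n -> 'I_k) (gamma : 'I_n -> R) (alpha : 'I_k -> R)
  (f : 'I_n -> 'rV[R]_d -> R) (Y V : 'M[R]_(n, d)) : R :=
  \sum_i dotv (gradv (f i) (row i Y) + Ar c gamma alpha i Y + Br c gamma alpha i Y) (row i V).

Lemma decomp (R : realType) n k d (c : 'I_n -> 'I_k) (gamma : 'I_n -> R) (alpha : 'I_k -> R)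
  (f : 'I_n -> 'rV[R]_d -> R) (X Y : 'M[R]_(n, d)) :
  \sum_i wg c gamma alpha i != 0 -> (forall j, \sum_i wc c gamma j i != 0) ->
  Fobj c gamma alpha f X - Fobj c gamma alpha f Y =
    \sum_i (f i (row i X) - f i (row i Y) - dotv (gradv (f i) (row i Y)) (row i (X - Y)))
    + Sfun c gamma alpha f Y (X - Y)
    + 2^-1 * Vr (wcl c gamma alpha) (fun i Z => cmean c gamma Z (c i)) (X - Y)
    + 2^-1 * Vr (wg c gamma alpha) (fun _ Z => gmean c gamma alpha Z) (X - Y).
Proof.
move=> W0 Wc0.
rewrite !Fobj_sum.
rewrite (@Vr_split _ _ _ (wcl c gamma alpha) (fun i Z => cmean c gamma Z (c i)) X Y); last 2 first.
- by move=> i X' Y'; rewrite cmean_lin.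
- by move=> Z; rewrite cl_orth.
rewrite (@Vr_split _ _ _ (wg c gamma alpha) (fun _ Z => gmean c gamma alpha Z) X Y); last 2 first.
- by move=> i X' Y'; rewrite gmean_lin.
- by move=> Z; rewrite gmean_orth.
have E1 : \sum_i wcl c gamma alpha i * dotv (row i Y - cmean c gamma Y (c i)) (row i X - row i Y)
   = \sum_i dotv (Br c gamma alpha i Y) (row i (X - Y)).
  by apply: eq_bigr => i _; rewrite /Br dotvZl rowB'.
have E2 : \sum_i wg c gamma alpha i * dotv (row i Y - gmean c gamma alpha Y) (row i X - row i Y)
   = \sum_i dotv (Ar c gamma alpha i Y) (row i (X - Y)).
  by apply: eq_bigr => i _; rewrite /Ar dotvZl rowB'.
have E3 : Sfun c gamma alpha f Y (X - Y) = \sum_i dotv (gradv (f i) (row i Y)) (row i (X - Y))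
   + \sum_i dotv (Ar c gamma alpha i Y) (row i (X - Y)) + \sum_i dotv (Br c gamma alpha i Y) (row i (X - Y)).
  by rewrite /Sfun -!big_split; apply: eq_bigr => i _; rewrite !dotvDl.
rewrite E1 E2 E3.
have E4 : \sum_i (f i (row i X) - f i (row i Y) - dotv (gradv (f i) (row i Y)) (row i (X - Y))) =
   \sum_i f i (row i X) - \sum_i f i (row i Y) - \sum_i dotv (gradv (f i) (row i Y)) (row i (X - Y)).
  by rewrite -!sumrB.
rewrite E4.
by field.
Qed.

Lemma Sfun_scale (R : realType) n k d (c : 'I_n -> 'I_k) (gamma : 'I_n -> R) (alpha : 'I_k -> R)
  (f : 'I_n -> 'rV[R]_d -> R) (Y V : 'M[R]_(n, d)) (t : R) :
  Sfun c gamma alpha f Y (t *: V) = t * Sfun c gamma alpha f Y V.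
Proof. by rewrite /Sfun mulr_sumr; apply: eq_bigr => i _; rewrite rowZ' dotvZr. Qed.

Lemma pos_lim (R : realType) (s C : R) : (forall t : R, 0 < t -> 0 <= t * s + t ^+ 2 * C) -> 0 <= s.
Proof.
move=> H; rewrite leNgt; apply/negP => s0.
have [C0|C0] := lerP C 0.
  have := H 1 ltr01; rewrite mul1r expr1n mul1r; lra.
have t0 : 0 < - s / (2 * C) by rewrite divr_gt0 // ?oppr_gt0 // mulr_gt0.
have := H _ t0.
have -> : - s / (2 * C) * s + (- s / (2 * C)) ^+ 2 * C = - (s ^+ 2 / (4 * C)).
  by field; rewrite gt_eqF.
rewrite oppr_ge0 => H2.
have s2 : 0 < s ^+ 2 by rewrite exprn_even_gt0 //= lt_eqF.
have : 0 < s ^+ 2 / (4 * C) by rewrite divr_gt0 // mulr_gt0.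
lra.
Qed.

Lemma optimality (R : realType) n k d (c : 'I_n -> 'I_k) (gamma : 'I_n -> R) (alpha : 'I_k -> R)
  (mu L : R) (f : 'I_n -> 'rV[R]_d -> R) (Y V : 'M[R]_(n, d)) :
  \sum_i wg c gamma alpha i != 0 -> (forall j, \sum_i wc c gamma j i != 0) ->
  0 <= mu -> 0 < L ->
  (forall i, strongly_convex mu (f i)) -> (forall i, smooth L (f i)) ->
  (forall Th', Fobj c gamma alpha f Y <= Fobj c gamma alpha f Th') ->
  Sfun c gamma alpha f Y V = 0.
Proof.
move=> W0 Wc0 mu0 L0 sc sm opt.
have key : forall V, 0 <= Sfun c gamma alpha f Y V.
  move=> {}V; apply: (@pos_lim _ _ (\sum_i L / 2 * sqnv (row i V)
     + 2^-1 * Vr (wcl c gamma alpha) (fun i Z => cmean c gamma Z (c i)) V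
     + 2^-1 * Vr (wg c gamma alpha) (fun _ Z => gmean c gamma alpha Z) V)) => t t0.
  have := opt (t *: V + Y); rewrite -subr_ge0 (decomp f (t *: V + Y) Y W0 Wc0) addrK.
  rewrite !Vr_scale; last 2 first.
  - by move=> i Z; rewrite gmean_hom.
  - by move=> i Z; rewrite cmean_hom.
  rewrite Sfun_scale => H; apply: (le_trans H).
  have Hd : \sum_i (f i (row i (t *: V + Y)) - f i (row i Y) - dotv (gradv (f i) (row i Y)) (row i (t *: V)))
      <= t ^+ 2 * \sum_i L / 2 * sqnv (row i V).
    rewrite mulr_sumr; apply: ler_sum => i _.
    have := descent (row i Y) (row i (t *: V + Y)) mu0 L0 (sc i) (sm i).
    rewrite rowD' addrK rowZ' sqnvZ; lra.
  rewrite !mulrDr; lra.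
apply/eqP; rewrite eq_le key andbT.
have := key (- V).
have -> : - V = (-1) *: V by rewrite scaleN1r.
by rewrite Sfun_scale mulN1r oppr_ge0.
Qed.
Lemma row_bound (R : realType) d (p0 pj tau D : R) (a a' b b' g g' : 'rV[R]_d) :
  0 < p0 < 1 -> 0 < pj < 1 -> D = p0 + 2 * (1 - p0) * pj -> tau = p0 / D ->
  p0 * sqnv (p0^-1 *: ((a + a') + tau *: (b + b')))
  + (1 - p0) * pj * sqnv (((1 - tau) / ((1 - p0) * pj)) *: (b + b'))
  + (1 - p0) * (1 - pj) * sqnv (((1 - p0) * (1 - pj))^-1 *: g)
  <= 2 * (2 / p0 * sqnv a + 2 / D * sqnv b + (1 - p0)^-1 * (1 - pj)^-1 * sqnv (g - g'))
   + 2 * (2 / p0 * sqnv a' + 2 / D * sqnv b' + (1 - p0)^-1 * (1 - pj)^-1 * sqnv g').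
Proof.
move=> /andP [p00 p01] /andP [pj0 pj1] HD Ht.
have q0 : 0 < 1 - p0 by rewrite subr_gt0.
have qj : 0 < 1 - pj by rewrite subr_gt0.
have D0 : 0 < D by rewrite HD; apply: addr_gt0 => //; rewrite !mulr_gt0.
have H1 : sqnv ((a + a') + tau *: (b + b')) <=
   2 * (2 * sqnv a + 2 * (tau ^+ 2 * sqnv b)) + 2 * (2 * sqnv a' + 2 * (tau ^+ 2 * sqnv b')).
  have -> : (a + a') + tau *: (b + b') = (a + tau *: b) + (a' + tau *: b').
    by rewrite scalerDr addrACA.
  apply: (le_trans (sqnvD_le _ _)).
  have := sqnvD_le a (tau *: b); have := sqnvD_le a' (tau *: b'); rewrite !sqnvZ; lra.
have H2 := sqnvD_le b b'.
have H3 : sqnv g <= 2 * sqnv (g - g') + 2 * sqnv g'.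
  by have := sqnvD_le (g - g') g'; rewrite subrK.
rewrite !sqnvZ.
set cV := (1 - tau) / ((1 - p0) * pj).
have K1 : p0 * (p0^-1 ^+ 2 * sqnv (a + a' + tau *: (b + b'))) <=
   p0^-1 * (2 * (2 * sqnv a + 2 * (tau ^+ 2 * sqnv b)) + 2 * (2 * sqnv a' + 2 * (tau ^+ 2 * sqnv b'))).
  have -> : p0 * (p0^-1 ^+ 2 * sqnv (a + a' + tau *: (b + b'))) = p0^-1 * sqnv (a + a' + tau *: (b + b')).
    by field; rewrite gt_eqF.
  by apply: ler_wpM2l => //; rewrite invr_ge0 ltW.
have K2 : (1 - p0) * pj * (cV ^+ 2 * sqnv (b + b')) <=
   ((1 - p0) * pj * cV ^+ 2) * (2 * sqnv b + 2 * sqnv b').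
  rewrite mulrA; apply: ler_wpM2l => //.
  by apply: mulr_ge0; [apply: mulr_ge0; apply: ltW | exact: sqr_ge0].
have K3 : (1 - p0) * (1 - pj) * (((1 - p0) * (1 - pj))^-1 ^+ 2 * sqnv g) <=
   ((1 - p0)^-1 * (1 - pj)^-1) * (2 * sqnv (g - g') + 2 * sqnv g').
  have -> : (1 - p0) * (1 - pj) * (((1 - p0) * (1 - pj))^-1 ^+ 2 * sqnv g) = (1 - p0)^-1 * (1 - pj)^-1 * sqnv g.
    by field; rewrite !gt_eqF.
  by apply: ler_wpM2l => //; rewrite mulr_ge0 // invr_ge0 ltW.
have E : p0^-1 * (2 * (2 * sqnv a + 2 * (tau ^+ 2 * sqnv b)) + 2 * (2 * sqnv a' + 2 * (tau ^+ 2 * sqnv b')))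
   + ((1 - p0) * pj * cV ^+ 2) * (2 * sqnv b + 2 * sqnv b')
   + ((1 - p0)^-1 * (1 - pj)^-1) * (2 * sqnv (g - g') + 2 * sqnv g')
   = 2 * (2 / p0 * sqnv a + 2 / D * sqnv b + (1 - p0)^-1 * (1 - pj)^-1 * sqnv (g - g'))
   + 2 * (2 / p0 * sqnv a' + 2 / D * sqnv b' + (1 - p0)^-1 * (1 - pj)^-1 * sqnv g').
  rewrite /cV Ht HD; field.
  by rewrite -HD !gt_eqF ?mulr_gt0.
lra.
Qed.
Lemma EsqG_eq (R : realType) n k d (c : 'I_n -> 'I_k) (gamma : 'I_n -> R) (alpha : 'I_k -> R)
  (f : 'I_n -> 'rV[R]_d -> R) (p0 : R) (p tau : 'I_k -> R) (Th : 'M[R]_(n, d)) :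
  EsqG c gamma alpha f p0 p tau Th = \sum_i
   (p0 * sqnv ((gamma i * alpha (c i) / p0) *: (row i Th - gmean c gamma alpha Th)
      + (gamma i * tau (c i) * (1 - alpha (c i)) / p0) *: (row i Th - cmean c gamma Th (c i)))
   + (1 - p0) * p (c i) * sqnv ((gamma i * (1 - tau (c i)) * (1 - alpha (c i)) / ((1 - p0) * p (c i)))
        *: (row i Th - cmean c gamma Th (c i)))
   + (1 - p0) * (1 - p (c i)) * sqnv (((1 - p0) * (1 - p (c i)))^-1 *: gradv (f i) (row i Th))).
Proof.
rewrite /EsqG.
under eq_bigr => xi _.
  rewrite /sqnM mulr_sumr.
  under eq_bigr => i _.
    have -> : \sum_(l < d) Gorac c gamma alpha f p0 p tau xi Th i l ^+ 2 =
      sqnv (if xi ord0 then (gamma i * alpha (c i) / p0) *: (row i Th - gmean c gamma alpha Th)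
      + (gamma i * tau (c i) * (1 - alpha (c i)) / p0) *: (row i Th - cmean c gamma Th (c i))
      else if xi (lift ord0 (c i)) then (gamma i * (1 - tau (c i)) * (1 - alpha (c i)) / ((1 - p0) * p (c i)))
        *: (row i Th - cmean c gamma Th (c i))
      else ((1 - p0) * (1 - p (c i)))^-1 *: gradv (f i) (row i Th)).
      by rewrite /sqnv; apply: eq_bigr => l _; rewrite /Gorac mxE.
    over.
  over.
rewrite exchange_big /=; apply: eq_bigr => i _.
rewrite (marg p0 p (c i) (fun b0 b1 => sqnv (if b0 then (gamma i * alpha (c i) / p0) *: (row i Th - gmean c gamma alpha Th)
      + (gamma i * tau (c i) * (1 - alpha (c i)) / p0) *: (row i Th - cmean c gamma Th (c i))
      else if b1 then (gamma i * (1 - tau (c i)) * (1 - alpha (c i)) / ((1 - p0) * p (c i)))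
        *: (row i Th - cmean c gamma Th (c i))
      else ((1 - p0) * (1 - p (c i)))^-1 *: gradv (f i) (row i Th)))) /=.
ring.
Qed.

Lemma U_eq (R : realType) n k d (c : 'I_n -> 'I_k) (gamma : 'I_n -> R) (alpha : 'I_k -> R)
  (p0 : R) (tau : 'I_k -> R) (Th Thh : 'M[R]_(n, d)) i :
  (gamma i * alpha (c i) / p0) *: (row i Th - gmean c gamma alpha Th)
      + (gamma i * tau (c i) * (1 - alpha (c i)) / p0) *: (row i Th - cmean c gamma Th (c i))
  = p0^-1 *: ((Ar c gamma alpha i (Th - Thh) + Ar c gamma alpha i Thh)
      + tau (c i) *: (Br c gamma alpha i (Th - Thh) + Br c gamma alpha i Thh)).
Proof.
rewrite /Ar /Br -!scalerDr -gmean_lin -cmean_lin rowB'.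
by apply/rowP => l; rewrite !mxE /wg /wcl; ring.
Qed.

Lemma V_eq (R : realType) n k d (c : 'I_n -> 'I_k) (gamma : 'I_n -> R) (alpha : 'I_k -> R)
  (p0 : R) (p tau : 'I_k -> R) (Th Thh : 'M[R]_(n, d)) i :
  (gamma i * (1 - tau (c i)) * (1 - alpha (c i)) / ((1 - p0) * p (c i))) *: (row i Th - cmean c gamma Th (c i))
  = ((1 - tau (c i)) / ((1 - p0) * p (c i))) *: (Br c gamma alpha i (Th - Thh) + Br c gamma alpha i Thh).
Proof.
rewrite /Br -!scalerDr -cmean_lin rowB'.
by apply/rowP => l; rewrite !mxE /wcl; ring.
Qed.
Lemma sq_phi (R : realType) n k d (c : 'I_n -> 'I_k) (gamma : 'I_n -> R) (alpha : 'I_k -> R)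
  (Y : 'M[R]_(n, d)) : \sum_i wg c gamma alpha i != 0 ->
  sqnM (gradM (phi c gamma alpha) Y) = \sum_i sqnv (Ar c gamma alpha i Y).
Proof.
move=> W0; rewrite /sqnM; apply: eq_bigr => i _; rewrite /sqnv; apply: eq_bigr => l _.
rewrite /gradM mxE (derive_Vr i l (phi_eq c gamma alpha)
   (fun i X Y => gmean_lin c gamma alpha X Y) (fun i a Z => gmean_hom c gamma alpha a Z)
   (fun Z => gmean_orth Y Z W0)).
by rewrite /Ar [in RHS]mxE.
Qed.

Lemma sq_psi (R : realType) n k d (c : 'I_n -> 'I_k) (gamma : 'I_n -> R) (alpha : 'I_k -> R)
  (p0 : R) (p : 'I_k -> R) (Y : 'M[R]_(n, d)) : (forall j, \sum_i wc c gamma j i != 0) ->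
  \sum_(j < k) (2 * (1 - alpha j) ^+ 2 / (p0 + 2 * (1 - p0) * p j)) * sqnM (gradM (psi c gamma j) Y)
  = \sum_i 2 / (p0 + 2 * (1 - p0) * p (c i)) * sqnv (Br c gamma alpha i Y).
Proof.
move=> Wc0.
have E : forall j i l, gradM (psi c gamma j) Y i l = wc c gamma j i * (row i Y - cmean c gamma Y j) 0 l.
  move=> j i l; rewrite /gradM mxE.
  exact: (derive_Vr i l (psi_eq c gamma j)
   (fun i X Y => cmean_lin c gamma j X Y) (fun i a Z => cmean_hom c gamma j a Z)
   (fun Z => cmean_orth Y (cmean c gamma Z j) (Wc0 j))).
under eq_bigr do rewrite /sqnM mulr_sumr.
rewrite exchange_big /=; apply: eq_bigr => i _.
rewrite (bigD1 (c i)) //= [X in _ + X]big1 => [|j /negbTE Hj]; last first.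
  rewrite big1 ?mulr0 // => l _; rewrite E /wc eq_sym Hj mul0r; exact: expr0n.
rewrite addr0 /sqnv !mulr_sumr; apply: eq_bigr => l _.
rewrite E /Br /wc /wcl eqxx !mxE; ring.
Qed.

Lemma sq_Fj (R : realType) n k d (c : 'I_n -> 'I_k) (f : 'I_n -> 'rV[R]_d -> R)
  (p : 'I_k -> R) (Y : 'M[R]_(n, d)) :
  \sum_(j < k) (1 - p j)^-1 * sqnM (gradM (Fj c f j) Y)
  = \sum_i (1 - p (c i))^-1 * sqnv (gradv (f i) (row i Y)).
Proof.
under eq_bigr do rewrite /sqnM mulr_sumr.
rewrite exchange_big /=; apply: eq_bigr => i _.
rewrite (bigD1 (c i)) //= [X in _ + X]big1 => [|j /negbTE Hj]; last first.
  rewrite big1 ?mulr0 // => l _; rewrite /gradM mxE derive_Fj eq_sym Hj; exact: expr0n.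
rewrite addr0 /sqnv; congr (_ * _); apply: eq_bigr => l _.
by rewrite /gradM /gradv !mxE derive_Fj eqxx.
Qed.

Lemma sigma2_eq (R : realType) n k d (c : 'I_n -> 'I_k) (gamma : 'I_n -> R) (alpha : 'I_k -> R)
  (f : 'I_n -> 'rV[R]_d -> R) (p0 : R) (p : 'I_k -> R) (Y : 'M[R]_(n, d)) :
  \sum_i wg c gamma alpha i != 0 -> (forall j, \sum_i wc c gamma j i != 0) ->
  sigma2 c gamma alpha f p0 p Y = \sum_i (2 / p0 * sqnv (Ar c gamma alpha i Y)
     + 2 / (p0 + 2 * (1 - p0) * p (c i)) * sqnv (Br c gamma alpha i Y)
     + (1 - p0)^-1 * (1 - p (c i))^-1 * sqnv (gradv (f i) (row i Y))).
Proof.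
move=> W0 Wc0.
rewrite /sigma2 sq_phi // sq_psi // sq_Fj !big_split /= !mulr_sumr.
by congr (_ + _ + _); apply: eq_bigr => i _; rewrite mulrA.
Qed.
Lemma scrL_B1 (R : realType) n k (c : 'I_n -> 'I_k) (gamma : 'I_n -> R) (alpha : 'I_k -> R)
  (L p0 : R) (p : 'I_k -> R) i : 0 < p0 ->
  2 / p0 * wg c gamma alpha i <= scrL c gamma alpha L p0 p.
Proof.
move=> p00.
rewrite /scrL le_max; apply/orP; left.
apply: ler_wpM2l; first by rewrite divr_ge0 // ltW.
apply: le_trans (le_bigmax 0 _ (c i)).
by apply: (le_bigmax_cond 0 (fun i' => alpha (c i) * gamma i')); exact: eqxx.
Qed.

Lemma scrL_B2 (R : realType) n k (c : 'I_n -> 'I_k) (gamma : 'I_n -> R) (alpha : 'I_k -> R)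
  (L p0 : R) (p : 'I_k -> R) i :
  0 < p0 < 1 -> (forall j, 0 < p j < 1) -> (forall j, 0 <= alpha j <= 1) ->
  2 * wcl c gamma alpha i / (p0 + 2 * (1 - p0) * p (c i)) <= scrL c gamma alpha L p0 p.
Proof.
move=> /andP [p00 p01] hp ha.
have /andP [pj0 pj1] := hp (c i).
have /andP [a0 a1] := ha (c i).
have D0 : 0 < p0 + 2 * (1 - p0) * p (c i) by apply: addr_gt0 => //; rewrite !mulr_gt0 // subr_gt0.
rewrite /scrL le_max; apply/orP; right; rewrite le_max; apply/orP; left.
apply: le_trans (le_bigmax 0 _ (c i)).
rewrite /wcl !mulrA; apply: ler_wpM2r; first by rewrite invr_ge0 ltW.
apply: ler_wpM2l; first by rewrite mulr_ge0 // subr_ge0.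
by apply: (le_bigmax_cond 0 gamma); exact: eqxx.
Qed.

Lemma scrL_B3 (R : realType) n k (c : 'I_n -> 'I_k) (gamma : 'I_n -> R) (alpha : 'I_k -> R)
  (L p0 : R) (p : 'I_k -> R) j : 0 <= L -> 0 < p0 < 1 ->
  L * ((1 - p0)^-1 * (1 - p j)^-1) <= scrL c gamma alpha L p0 p.
Proof.
move=> L0 /andP [p00 p01].
rewrite /scrL le_max; apply/orP; right; rewrite le_max; apply/orP; right.
rewrite mulrA; apply: ler_wpM2l; first by rewrite divr_ge0 // subr_ge0 ltW.
exact: (le_bigmax 0 (fun j => (1 - p j)^-1) j).
Qed.
Unset Implicit Arguments.
Set Strict Implicit.

Theorem mainTheorem7 (R : realType) (n k d : nat) (c : 'I_n -> 'I_k)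
  (gamma : 'I_n -> R) (alpha : 'I_k -> R) (mu L : R)
  (f : 'I_n -> 'rV[R]_d -> R) (p0 : R) (p tau : 'I_k -> R)
  (Thh Th : 'M[R]_(n, d)) :
  (0 < d)%N ->
  (forall j : 'I_k, exists i : 'I_n, c i = j) ->
  (forall i, 0 < gamma i) ->
  (forall j, 0 <= alpha j <= 1) ->
  (exists j, alpha j != 0) ->
  0 < mu -> mu <= L ->
  (forall i x, differentiable (f i) x) ->
  (forall i, strongly_convex mu (f i)) ->
  (forall i, smooth L (f i)) ->
  (forall Th', Fobj c gamma alpha f Thh <= Fobj c gamma alpha f Th') ->
  0 < p0 < 1 ->
  (forall j, 0 < p j < 1) ->
  (forall j, tau j = p0 / (p0 + 2 * (1 - p0) * p j)) ->
  EsqG c gamma alpha f p0 p tau Th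
    <= 4 * scrL c gamma alpha L p0 p * (Fobj c gamma alpha f Th - Fobj c gamma alpha f Thh)
       + 2 * sigma2 c gamma alpha f p0 p Thh.
Proof.
move=> d0 Hcl Hg Ha [ja Hja] mu0 muL _ Hsc Hsm Hopt Hp0 Hp Htau.
have L0 : 0 < L by apply: lt_le_trans mu0 muL.
have mu0' : 0 <= mu by exact: ltW.
have wg0 : forall i, 0 <= wg c gamma alpha i.
  move=> i; have /andP [a0 _] := Ha (c i); rewrite /wg mulr_ge0 // ltW //.
have wcl0 : forall i, 0 <= wcl c gamma alpha i.
  move=> i; have /andP [_ a1] := Ha (c i); rewrite /wcl mulr_ge0 // ?subr_ge0 // ltW //.
have W0 : \sum_i wg c gamma alpha i != 0.
  have [i0 Hi0] := Hcl ja.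
  have pos : 0 < wg c gamma alpha i0.
    have /andP [a0 _] := Ha ja.
    by rewrite /wg Hi0 mulr_gt0 // lt_def Hja a0.
  apply: lt0r_neq0; rewrite (bigD1 i0) //=; apply: (lt_le_trans pos).
  by rewrite lerDl sumr_ge0.
have Wc0 : forall j, \sum_i wc c gamma j i != 0.
  move=> j; have [i0 Hi0] := Hcl j.
  apply: lt0r_neq0; rewrite (bigD1 i0) //= /wc Hi0 eqxx; apply: (lt_le_trans (Hg i0)).
  by rewrite lerDl sumr_ge0 // => i _; case: ifP => _ //; exact: ltW.
have Sopt := optimality (Th - Thh) W0 Wc0 mu0' L0 Hsc Hsm Hopt.
have Hdec := decomp f Th Thh W0 Wc0.
rewrite Sopt addr0 /Vr !mulr_sumr -!big_split /= in Hdec.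
rewrite EsqG_eq (sigma2_eq f p0 p Thh W0 Wc0) Hdec !mulr_sumr -big_split /=.
apply: ler_sum => i _.
rewrite (U_eq _ _ _ _ _ Th Thh i) (V_eq _ _ _ _ _ _ Th Thh i).
have RB := row_bound (Ar c gamma alpha i (Th - Thh)) (Ar c gamma alpha i Thh)
  (Br c gamma alpha i (Th - Thh)) (Br c gamma alpha i Thh)
  (gradv (f i) (row i Th)) (gradv (f i) (row i Thh)) Hp0 (Hp (c i))
  (erefl (p0 + 2 * (1 - p0) * p (c i))) (Htau (c i)).
apply: (le_trans RB).
set S := scrL c gamma alpha L p0 p.
set D := p0 + 2 * (1 - p0) * p (c i).
set Di := f i (row i Th) - f i (row i Thh) - dotv (gradv (f i) (row i Thh)) (row i (Th - Thh)).
set sg := sqnv (row i (Th - Thh) - gmean c gamma alpha (Th - Thh)).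
set sc := sqnv (row i (Th - Thh) - cmean c gamma (Th - Thh) (c i)).
have sg0 : 0 <= sg by exact: sqnv_ge0.
have sc0 : 0 <= sc by exact: sqnv_ge0.
have EA : sqnv (Ar c gamma alpha i (Th - Thh)) = wg c gamma alpha i ^+ 2 * sg by rewrite /Ar sqnvZ.
have EB : sqnv (Br c gamma alpha i (Th - Thh)) = wcl c gamma alpha i ^+ 2 * sc by rewrite /Br sqnvZ.
have Hcc := cocoercive (row i Thh) (row i Th) mu0' L0 (Hsc i) (Hsm i).
rewrite -rowB' -/Di in Hcc.
have Di0 : 0 <= Di.
  apply: le_trans Hcc; apply: divr_ge0; [exact: sqnv_ge0 | rewrite mulr_ge0 // ltW //].
have p00 : 0 < p0 by case/andP: Hp0.
have B1 := @scrL_B1 R n k c gamma alpha L p0 p i p00.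
have B2 := @scrL_B2 R n k c gamma alpha L p0 p i Hp0 Hp Ha.
have B3 := @scrL_B3 R n k c gamma alpha L p0 p (c i) (ltW L0) Hp0.
rewrite -/S in B1 B2 B3.
have K1 : 2 / p0 * sqnv (Ar c gamma alpha i (Th - Thh)) <= S * (wg c gamma alpha i * sg).
  have -> : 2 / p0 * sqnv (Ar c gamma alpha i (Th - Thh)) = (2 / p0 * wg c gamma alpha i) * (wg c gamma alpha i * sg).
    by rewrite EA; ring.
  by apply: ler_wpM2r => //; rewrite mulr_ge0.
have K2 : 2 / D * sqnv (Br c gamma alpha i (Th - Thh)) <= S * (wcl c gamma alpha i * sc).
  have -> : 2 / D * sqnv (Br c gamma alpha i (Th - Thh)) = (2 * wcl c gamma alpha i / D) * (wcl c gamma alpha i * sc).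
    by rewrite EB; ring.
  by apply: ler_wpM2r => //; rewrite mulr_ge0.
have K3 : (1 - p0)^-1 * (1 - p (c i))^-1 * sqnv (gradv (f i) (row i Th) - gradv (f i) (row i Thh)) <= 2 * S * Di.
  have H1 : sqnv (gradv (f i) (row i Th) - gradv (f i) (row i Thh)) <= 2 * L * Di.
    by move: Hcc; rewrite ler_pdivrMr ?mulr_gt0 // mulrC.
  have q0 : 0 <= (1 - p0)^-1 * (1 - p (c i))^-1.
    have /andP [_ pj1] := Hp (c i); have /andP [_ p01] := Hp0.
    by rewrite mulr_ge0 // invr_ge0 subr_ge0 ltW.
  apply: (le_trans (ler_wpM2l q0 H1)).
  have -> : (1 - p0)^-1 * (1 - p (c i))^-1 * (2 * L * Di) = 2 * (L * ((1 - p0)^-1 / (1 - p (c i)))) * Di by ring.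
  apply: ler_wpM2r => //; apply: ler_wpM2l => //.
lra.
Qed.
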